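(* Let $\mathcal X\subseteq\mathbb R^m$ be nonempty, convex and compact, $F:\mathbb R^m\to\mathbb R^r$ affine, $C\in\mathbb R^{r\times n}$ acute with nonzero columns, and $\Theta(x,y)=\frac12\|F(x)-Cy\|^2$. For each $x$, let $\Theta^L(x,\cdot):[0,1]^n\to\mathbb R$ be the Lovász extension of $\Theta(x,\cdot)|_{\{0,1\}^n}$. Then: (i) the problem $\min_{x\in\mathcal X}\max_{y\in[0,1]^n}\Theta^L(x,y)$ admits a saddle point $(x^*,y^* )\in\mathcal X\times[0,1]^n$, i.e. $\Theta^L(x^*,y)\le\Theta^L(x^*,y^* )\le\Theta^L(x,y^* )$ for all $x\in\mathcal X$, $y\in[0,1]^n$; (ii) for every saddle point $(x^*,y^* )$ of that problem and every $\bar y\in\operatorname{SOL}(\Theta(x^*,\cdot),\{0,1\}^n)$, the pair $(x^*,\bar y)$ is a global minimax point of $\min_{x\in\mathcal X}\max_{y\in\{0,1\}^n}\Theta(x,y)$; (iii) for every saddle point $(x^*,y^* )$ of that problem, $y^*$ lies in the convex hull of $\operatorname{SOL}(\Theta(x^*,\cdot),\{0,1\}^n)$.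
   Context: $C=(c_1,\dots,c_n)$ is acute if $c_i^\top c_j\ge0$ for all $i\neq j$. Lovász extension: for $h:\{0,1\}^n\to\mathbb R$ and $y\in[0,1]^n$, order the components $y_{j_1}\ge\cdots\ge y_{j_n}$ with $(j_1,\dots,j_n)$ a permutation of $[n]$, set $y_{j_0}=1$, $y_{j_{n+1}}=0$, and $h^L(y)=\sum_{k=0}^n h(\mathbf e_{\{j_1,\dots,j_k\}})(y_{j_k}-y_{j_{k+1}})$, where $\mathbf e_S\in\{0,1\}^n$ is the indicator vector of $S\subseteq[n]$. $\operatorname{SOL}(f,\mathcal C)$ is the set of maximizers of $f$ over $\mathcal C$. A global minimax point of $\min_{x\in\mathcal X}\max_{y\in\mathcal Y}\Theta$ is a pair $(x^*,y^* )\in\mathcal X\times\mathcal Y$ with $\max_{y\in\mathcal Y}\Theta(x^*,y)\le\Theta(x^*,y^* )\le\min_{x\in\mathcal X}\max_{y\in\mathcal Y}\Theta(x,y)$. *)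

(* Defs.v *)
From mathcomp Require Import all_boot all_order all_algebra.
From mathcomp Require Import all_classical all_reals all_analysis.
Set Implicit Arguments. Unset Strict Implicit. Unset Printing Implicit Defensive.
Import Order.TTheory GRing.Theory Num.Theory.
Import numFieldTopology.Exports numFieldNormedType.Exports.
Local Open Scope classical_set_scope.
Local Open Scope ring_scope.

Section Defs.
Variable R : realType.

Definition affine_map (m r : nat) (F : 'cV[R]_m -> 'cV[R]_r) : Prop :=
  exists (A : 'M[R]_(r, m)) (b : 'cV[R]_r), forall x, F x = A *m x + b.

Definition acute (r n : nat) (C : 'M[R]_(r, n)) : Prop :=
  forall i j : 'I_n, i != j -> 0 <= ((col i C)^T *m col j C) 0 0.

Definition nonzero_columns (r n : nat) (C : 'M[R]_(r, n)) : Prop :=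
  forall j : 'I_n, col j C != 0.

Definition sqnorm (r : nat) (v : 'cV[R]_r) : R := \sum_(k < r) (v k 0) ^+ 2.

Definition Theta (m r n : nat) (F : 'cV[R]_m -> 'cV[R]_r) (C : 'M[R]_(r, n))
  (x : 'cV[R]_m) (y : 'cV[R]_n) : R := 2^-1 * sqnorm (F x - C *m y).

Definition binvec (n : nat) : set 'cV[R]_n :=
  [set y | forall i, y i 0 = 0 \/ y i 0 = 1].
Definition unitbox (n : nat) : set 'cV[R]_n :=
  [set y | forall i, 0 <= y i 0 <= 1].

Definition indic (n : nat) (S : seq 'I_n) : 'cV[R]_n :=
  \col_i (if i \in S then 1 else 0).

(* The indices are ordered so that
   y_{j_1} >= ... >= y_{j_n} (via a sort of enum 'I_n); y_{j_0} = 1 and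
   y_{j_{n+1}} = 0; h^L(y) = sum_{k=0}^n h(e_{j_1..j_k}) (y_{j_k} - y_{j_{k+1}}). *)
Definition lovasz_order (n : nat) (y : 'cV[R]_n) : seq 'I_n :=
  sort (fun i j : 'I_n => y j 0 <= y i 0) (enum 'I_n).

Definition lovasz_y (n : nat) (y : 'cV[R]_n) (k : nat) : R :=
  if k is k'.+1 then nth 0 [seq y j 0 | j <- lovasz_order y] k' else 1.

Definition lovasz (n : nat) (h : 'cV[R]_n -> R) (y : 'cV[R]_n) : R :=
  \sum_(k < n.+1)
     h (indic (take k (lovasz_order y))) * (lovasz_y y k - lovasz_y y k.+1).

Definition SOL (n : nat) (f : 'cV[R]_n -> R) (Cs : set 'cV[R]_n) : set 'cV[R]_n :=
  [set y | Cs y /\ forall z, Cs z -> f z <= f y].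

Definition saddle_point (m n : nat) (X : set 'cV[R]_m) (Y : set 'cV[R]_n)
  (Th : 'cV[R]_m -> 'cV[R]_n -> R) (xs : 'cV[R]_m) (ys : 'cV[R]_n) : Prop :=
  X xs /\ Y ys /\
  (forall y, Y y -> Th xs y <= Th xs ys) /\
  (forall x, X x -> Th xs ys <= Th x ys).

(* global minimax point of min_{x in X} max_{y in Y} Th, for Y on which the
   inner max is attained:
   max_{y in Y} Th(xs,y) <= Th(xs,ys) <= min_{x in X} max_{y in Y} Th(x,y).
   The second inequality is written as: for every x in X, Th(xs,ys) is at
   most max_{y in Y} Th(x,y), i.e. some y in Y has Th(xs,ys) <= Th(x,y). *)
Definition global_minimax (m n : nat) (X : set 'cV[R]_m) (Y : set 'cV[R]_n)
  (Th : 'cV[R]_m -> 'cV[R]_n -> R) (xs : 'cV[R]_m) (ys : 'cV[R]_n) : Prop :=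
  X xs /\ Y ys /\
  (forall y, Y y -> Th xs y <= Th xs ys) /\
  (forall x, X x -> exists2 y, Y y & Th xs ys <= Th x y).

Definition conv_hull (n : nat) (S : set 'cV[R]_n) : set 'cV[R]_n :=
  [set y | exists (k : nat) (p : 'I_k -> 'cV[R]_n) (w : 'I_k -> R),
     (forall i, S (p i)) /\ (forall i, 0 <= w i) /\
     \sum_(i < k) w i = 1 /\ y = \sum_(i < k) w i *: p i].

End Defs.

(* Main.v *)
Require Import Defs.
From mathcomp Require Import all_boot all_order all_algebra.
From mathcomp Require Import all_classical all_reals all_analysis.
Import Order.TTheory GRing.Theory Num.Theory.
Import numFieldTopology.Exports numFieldNormedType.Exports.
Local Open Scope classical_set_scope.
Local Open Scope ring_scope.

From mathcomp Require Import ring lra.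
Set Implicit Arguments. Unset Strict Implicit. Unset Printing Implicit Defensive.

Definition dot {R : realType} {r : nat} (u v : 'cV[R]_r) : R := \sum_k u k 0 * v k 0.

Lemma sqnormE {R : realType} {r} (u : 'cV[R]_r) : sqnorm u = dot u u.
Proof. by apply: eq_bigr => k _; rewrite expr2. Qed.

Lemma dotC {R : realType} {r} (u v : 'cV[R]_r) : dot u v = dot v u.
Proof. by apply: eq_bigr => k _; rewrite mulrC. Qed.

Lemma dotDr {R : realType} {r} (u v w : 'cV[R]_r) : dot u (v + w) = dot u v + dot u w.
Proof. by rewrite /dot -big_split; apply: eq_bigr => k _; rewrite mxE mulrDr. Qed.

Lemma dotNr {R : realType} {r} (u v : 'cV[R]_r) : dot u (- v) = - dot u v.
Proof. by rewrite /dot -sumrN; apply: eq_bigr => k _; rewrite mxE mulrN. Qed.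

Lemma dotZr {R : realType} {r} (a : R) (u v : 'cV[R]_r) : dot u (a *: v) = a * dot u v.
Proof. by rewrite /dot mulr_sumr; apply: eq_bigr => k _; rewrite mxE mulrCA. Qed.

Lemma dot0r {R : realType} {r} (u : 'cV[R]_r) : dot u 0 = 0.
Proof. by rewrite /dot big1 // => k _; rewrite mxE mulr0. Qed.

Lemma dot_sumr {R : realType} {r} (I : finType) (u : 'cV[R]_r) (v : I -> 'cV[R]_r) :
  dot u (\sum_i v i) = \sum_i dot u (v i).
Proof.
elim/big_rec2: _ => [|i y1 y2 _ <-]; first exact: dot0r.
by rewrite dotDr.
Qed.

Lemma dotDl {R : realType} {r} (u v w : 'cV[R]_r) : dot (v + w) u = dot v u + dot w u.
Proof. by rewrite !(dotC _ u) dotDr. Qed.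
Lemma dotNl {R : realType} {r} (u v : 'cV[R]_r) : dot (- v) u = - dot v u.
Proof. by rewrite !(dotC _ u) dotNr. Qed.
Lemma dotZl {R : realType} {r} (a : R) (u v : 'cV[R]_r) : dot (a *: v) u = a * dot v u.
Proof. by rewrite !(dotC _ u) dotZr. Qed.

Lemma sqnorm_ge0 {R : realType} {r} (u : 'cV[R]_r) : 0 <= sqnorm u.
Proof. by apply: sumr_ge0 => k _; rewrite sqr_ge0. Qed.

Lemma sqnormD {R : realType} {r} (u v : 'cV[R]_r) :
  sqnorm (u + v) = sqnorm u + 2 * dot u v + sqnorm v.
Proof.
rewrite !sqnormE dotDl !dotDr (dotC v u); ring.
Qed.

Lemma sqnormB {R : realType} {r} (u v : 'cV[R]_r) :
  sqnorm (u - v) = sqnorm u - 2 * dot u v + sqnorm v.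
Proof.
rewrite sqnormD dotNr !sqnormE dotNl dotNr opprK; ring.
Qed.

Lemma mix_sq {R : realType} {r} (I : finType) (w : I -> R) (z : I -> 'cV[R]_r) (u : 'cV[R]_r) :
  \sum_i w i = 1 ->
  \sum_i w i * sqnorm (u - z i) =
  sqnorm (u - \sum_i w i *: z i) + (\sum_i w i * sqnorm (z i) - sqnorm (\sum_i w i *: z i)).
Proof.
move=> w1.
have -> : \sum_i w i * sqnorm (u - z i) =
   sqnorm u * (\sum_i w i) - 2 * dot u (\sum_i w i *: z i) + \sum_i w i * sqnorm (z i).
  rewrite dot_sumr mulr_sumr mulr_sumr -sumrN -!big_split /=.
  by apply: eq_bigr => i _; rewrite sqnormB dotZr; ring.
rewrite sqnormB w1; ring.
Qed.

Lemma mixTheta {R : realType} {m r n} (F : 'cV[R]_m -> 'cV[R]_r) (C : 'M[R]_(r, n))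
  (I : finType) (w : I -> R) (z : I -> 'cV[R]_n) x :
  \sum_i w i = 1 ->
  \sum_i w i * Theta F C x (z i) =
  Theta F C x (\sum_i w i *: z i) +
    2^-1 * (\sum_i w i * sqnorm (C *m z i) - sqnorm (C *m \sum_i w i *: z i)).
Proof.
move=> w1.
have E : C *m (\sum_i w i *: z i) = \sum_i w i *: (C *m z i).
  by rewrite mulmx_sumr; apply: eq_bigr => i _; rewrite scalemxAr.
rewrite /Theta E.
have := mix_sq (fun i => C *m z i) (F x) w1 => /= H.
transitivity (2^-1 * \sum_i w i * sqnorm (F x - C *m z i)).
  by rewrite mulr_sumr; apply: eq_bigr => i _; ring.
by rewrite H; ring.
Qed.

Lemma jensen_sq {R : realType} {r} (I : finType) (w : I -> R) (z : I -> 'cV[R]_r) :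
  \sum_i w i = 1 -> (forall i, 0 <= w i) ->
  sqnorm (\sum_i w i *: z i) <= \sum_i w i * sqnorm (z i).
Proof.
move=> w1 w0.
have := mix_sq z (\sum_i w i *: z i) w1.
rewrite subrr.
have -> : sqnorm (0 : 'cV[R]_r) = 0 by rewrite /sqnorm big1 // => k _; rewrite mxE expr0n.
rewrite add0r => H.
have : 0 <= \sum_i w i * sqnorm (\sum_i0 w i0 *: z i0 - z i).
  by apply: sumr_ge0 => i _; apply: mulr_ge0 => //; exact: sqnorm_ge0.
by rewrite H subr_ge0.
Qed.

Lemma sqnorm_mul {R : realType} {r n} (C : 'M[R]_(r, n)) (z : 'cV[R]_n) :
  sqnorm (C *m z) = \sum_i \sum_j z i 0 * z j 0 * ((col i C)^T *m col j C) 0 0.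
Proof.
rewrite /sqnorm.
transitivity (\sum_k \sum_i \sum_j z i 0 * z j 0 * (C k i * C k j)).
  apply: eq_bigr => k _; rewrite expr2 !mxE mulr_suml; apply: eq_bigr => i _.
  rewrite mulr_sumr; apply: eq_bigr => j _; ring.
rewrite exchange_big; apply: eq_bigr => i _.
rewrite exchange_big; apply: eq_bigr => j _.
rewrite mxE mulr_sumr; apply: eq_bigr => k _; rewrite !mxE; ring.
Qed.

Definition bjoin {R : realType} {n} (a b : 'cV[R]_n) : 'cV[R]_n :=
  \col_i (a i 0 + b i 0 - a i 0 * b i 0).
Definition bmeet {R : realType} {n} (a b : 'cV[R]_n) : 'cV[R]_n :=
  \col_i (a i 0 * b i 0).

Lemma bin01 {R : realType} (x : R) : x = 0 \/ x = 1 -> x * x = x.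
Proof. by case=> ->; rewrite ?mul0r ?mul1r. Qed.

Lemma binvec_join {R : realType} {n} (a b : 'cV[R]_n) :
  binvec a -> binvec b -> binvec (bjoin a b).
Proof.
move=> ha hb i; rewrite mxE.
by case: (ha i) => ->; case: (hb i) => ->; [left|right|right|right]; ring.
Qed.

Lemma binvec_meet {R : realType} {n} (a b : 'cV[R]_n) :
  binvec a -> binvec b -> binvec (bmeet a b).
Proof.
move=> ha hb i; rewrite mxE.
by case: (ha i) => ->; case: (hb i) => ->; [left|left|left|right]; ring.
Qed.

Lemma coef_ge0 {R : realType} (ai bi aj bj : R) :
  ai = 0 \/ ai = 1 -> bi = 0 \/ bi = 1 -> aj = 0 \/ aj = 1 -> bj = 0 \/ bj = 1 ->
  0 <= (ai + bi - ai * bi) * (aj + bj - aj * bj) + (ai * bi) * (aj * bj) - (ai * aj + bi * bj).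
Proof.
by case=> ->; case=> ->; case=> ->; case=> ->; rewrite ?(mul0r, mulr0, mul1r, mulr1, add0r, addr0, subr0, subrr, sub0r); lra.
Qed.

Lemma coef_diag {R : realType} (ai bi : R) :
  ai = 0 \/ ai = 1 -> bi = 0 \/ bi = 1 ->
  (ai + bi - ai * bi) * (ai + bi - ai * bi) + (ai * bi) * (ai * bi) - (ai * ai + bi * bi) = 0.
Proof. by case=> ->; case=> ->; ring. Qed.

Lemma supermod {R : realType} {m r n} (F : 'cV[R]_m -> 'cV[R]_r) (C : 'M[R]_(r, n)) x a b :
  acute C -> binvec a -> binvec b ->
  Theta F C x a + Theta F C x b <= Theta F C x (bjoin a b) + Theta F C x (bmeet a b).
Proof.
move=> hC ha hb.
have sum_ab : bjoin a b + bmeet a b = a + b.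
  by apply/matrixP => i j; rewrite !mxE (ord1 j); ring.
have Hd : dot (F x) (C *m bjoin a b) + dot (F x) (C *m bmeet a b) =
          dot (F x) (C *m a) + dot (F x) (C *m b).
  by rewrite -!dotDr -!mulmxDr sum_ab.
have Hq : sqnorm (C *m a) + sqnorm (C *m b) <=
          sqnorm (C *m bjoin a b) + sqnorm (C *m bmeet a b).
  rewrite -subr_ge0 !sqnorm_mul.
  set G := fun i j : 'I_n => ((col i C)^T *m col j C) 0 0.
  rewrite -!big_split /= -sumrB; apply: sumr_ge0 => i _.
  rewrite -!big_split /= -sumrB; apply: sumr_ge0 => j _.
  set g := ((col i C)^T *m col j C) 0 0.
  have hg : i != j -> 0 <= g by move=> ij; exact: hC.
  rewrite !mxE -!mulrDl -mulrBl.
  have [eij|ij] := eqVneq i j.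
    by rewrite -eij [X in X * _]coef_diag ?mul0r.
  apply: mulr_ge0; last exact: hg.
  exact: coef_ge0.
rewrite /Theta !sqnormB.
suff : 0 <= (sqnorm (C *m bjoin a b) + sqnorm (C *m bmeet a b)) -
     (sqnorm (C *m a) + sqnorm (C *m b)) by move: Hd; lra.
by rewrite subr_ge0.
Qed.

Lemma sol_lattice {R : realType} {m r n} (F : 'cV[R]_m -> 'cV[R]_r) (C : 'M[R]_(r, n)) x a b :
  acute C -> SOL (Theta F C x) (@binvec R n) a -> SOL (Theta F C x) (@binvec R n) b ->
  SOL (Theta F C x) (@binvec R n) (bjoin a b) /\ SOL (Theta F C x) (@binvec R n) (bmeet a b).
Proof.
move=> hC [ba ma] [bb mb].
have bj := binvec_join ba bb; have bm := binvec_meet ba bb.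
have := supermod F x hC ba bb.
have := ma _ bj; have := ma _ bm; have := mb _ ba; have := ma _ bb => h1 h2 h3 h4 h5.
split; split => // z bz; have := ma _ bz; lra.
Qed.

Definition levf {R : realType} {n} (I : Type) (l : seq I) (w : I -> R) (z : I -> 'cV[R]_n) k :=
  \sum_(i <- l) w i * z i k 0.

Definition lev {R : realType} {n} (I : Type) (l : seq I) (w : I -> R) (z : I -> 'cV[R]_n) (s : R)
  : 'cV[R]_n := \col_k (((s < levf l w z k)%R : bool)%:R).

Lemma levf_bounds {R : realType} {n} (I : Type) (l : seq I) (w : I -> R) (z : I -> 'cV[R]_n) k :
  (forall i, 0 <= w i) -> (forall i, binvec (z i)) ->
  0 <= levf l w z k <= \sum_(i <- l) w i.
Proof.
move=> w0 bz; rewrite /levf; apply/andP; split.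
  by apply: sumr_ge0 => i _; case: (bz i k) => ->; rewrite ?mulr0 ?mulr1.
by apply: ler_sum => i _; case: (bz i k) => ->; rewrite ?mulr0 ?mulr1.
Qed.

Lemma level_sol {R : realType} {n} (S : set 'cV[R]_n) (I : Type) (l : seq I)
  (w : I -> R) (z : I -> 'cV[R]_n) :
  (forall a b, S a -> S b -> S (bjoin a b) /\ S (bmeet a b)) ->
  (forall i, 0 <= w i) -> (forall i, binvec (z i)) -> (forall i, 0 < w i -> S (z i)) ->
  forall s, 0 <= s -> s < \sum_(i <- l) w i -> S (lev l w z s).
Proof.
move=> hS w0 bz wS; elim: l => [|i l IH] s s0.
  by rewrite big_nil => /(le_lt_trans s0); rewrite ltxx.
rewrite big_cons => stot.
have fE : forall k, levf (i :: l) w z k = w i * z i k 0 + levf l w z k.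
  by move=> k; rewrite /levf big_cons.
have [wi0|wipos] := eqVneq (w i) 0.
  have -> : lev (i :: l) w z s = lev l w z s.
    by apply/matrixP => k j; rewrite !mxE fE wi0 mul0r add0r.
  by apply: IH => //; move: stot; rewrite wi0 add0r.
have wip : 0 < w i by rewrite lt_neqAle eq_sym wipos w0.
set Xa := bmeet (z i) (lev l w z (s - w i)).
set Xb := lev l w z s.
have levE : lev (i :: l) w z s = bjoin Xa Xb.
  apply/matrixP => k j; rewrite !mxE fE.
  case: (bz i k) => ->.
    by rewrite mulr0 !mul0r !add0r subr0.
  rewrite !mul1r mulr1.
  have -> : (s < w i + levf l w z k) = (s - w i < levf l w z k).
    by rewrite ltrBlDl.
  have imp : (s < levf l w z k) -> (s - w i < levf l w z k).
    by move=> h; apply: lt_trans h; rewrite ltrBlDr ltrDl.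
  case E1: (s - w i < _); case E2: (s < _) => /=; rewrite ?mul1r ?mul0r ?addr0 ?add0r ?subr0 ?subrr ?oppr0 //.
  - by rewrite addrK.
  - by move: (imp E2); rewrite E1.
have SXa : S Xa.
  have [sw|sw] := ltP (s - w i) 0.
    have -> : Xa = z i.
      apply/matrixP => k j; rewrite !mxE (ord1 j).
      have [f0 _] := andP (levf_bounds l k w0 bz).
      by rewrite (lt_le_trans sw f0) mulr1.
    exact: wS.
  have := IH (s - w i) sw; rewrite ltrBlDl => /(_ stot) SL.
  exact: (hS _ _ (wS _ wip) SL).2.
rewrite levE.
have [stl|stl] := ltP s (\sum_(i <- l) w i).
  exact: (hS _ _ SXa (IH s s0 stl)).1.
have -> : Xb = 0.
  apply/matrixP => k j; rewrite !mxE.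
  have [_ f1] := andP (levf_bounds l k w0 bz).
  by rewrite ltNge (le_trans f1 stl).
have -> : bjoin Xa 0 = Xa by apply/matrixP => k j; rewrite !mxE mulr0 addr0 subr0.
exact: SXa.
Qed.

Lemma tele {R : realType} (u : nat -> R) p q : (p <= q)%N ->
  \sum_(p <= k < q) (u k - u k.+1) = u p - u q.
Proof.
elim: q => [|q IH]; first by rewrite leqn0 => /eqP ->; rewrite big_geq // subrr.
rewrite leq_eqVlt => /orP[/eqP ->|]; first by rewrite big_geq // subrr.
rewrite ltnS => pq; rewrite big_nat_recr //= IH //; ring.
Qed.

Section Lo.
Context {R : realType} {n : nat} (y : 'cV[R]_n).
Local Notation sgm := (lovasz_order y).
Local Notation ly := (lovasz_y y).

Lemma lo_size : size sgm = n.
Proof. by rewrite size_sort size_enum_ord. Qed.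

Lemma lo_mem i : i \in sgm.
Proof. by rewrite mem_sort mem_enum. Qed.

Lemma lo_sorted (i0 : 'I_n) p q : (p <= q)%N -> (q < n)%N ->
  y (nth i0 sgm q) 0 <= y (nth i0 sgm p) 0.
Proof.
move=> pq qn.
have := @sorted_leq_nth _ (fun i j : 'I_n => y j 0 <= y i 0) _ _ i0 sgm.
apply.
- by move=> a b c /= h1 h2; exact: le_trans h2 h1.
- by move=> a /=.
- by apply: sort_sorted => a b /=; exact: le_total.
- by rewrite inE lo_size (leq_ltn_trans pq qn).
- by rewrite inE lo_size.
- exact: pq.
Qed.

Lemma ly_nth (i0 : 'I_n) k : (k < n)%N -> ly k.+1 = y (nth i0 sgm k) 0.
Proof. by move=> kn; rewrite /lovasz_y (nth_map i0) // lo_size. Qed.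

Lemma ly_big k : (n <= k)%N -> ly k.+1 = 0.
Proof. by move=> nk; rewrite /lovasz_y nth_default // size_map lo_size. Qed.

Lemma ly_index i : ly (index i sgm).+1 = y i 0.
Proof.
by rewrite (ly_nth i) ?nth_index ?lo_mem // -[X in (_ < X)%N]lo_size index_mem lo_mem.
Qed.

Lemma ly_sum1 : \sum_(k < n.+1) (ly k - ly k.+1) = 1.
Proof.
rewrite -(big_mkord xpredT (fun k => ly k - ly k.+1)) tele // ly_big //.
by rewrite subr0.
Qed.

Lemma ly_decomp : \sum_(k < n.+1) (ly k - ly k.+1) *: @Defs.indic R n (take k sgm) = y.
Proof.
apply/matrixP => i j; rewrite (ord1 j) summxE.
transitivity (\sum_(k < n.+1) (if (index i sgm < k)%N then ly k - ly k.+1 else 0)).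
  apply: eq_bigr => k _; rewrite !mxE in_take ?lo_mem //.
  by case: ifP; rewrite ?mulr1 ?mulr0.
have jn : (index i sgm < n)%N by rewrite -[X in (_ < X)%N]lo_size index_mem lo_mem.
rewrite -(big_mkord xpredT (fun k => if (index i sgm < k)%N then ly k - ly k.+1 else 0)).
rewrite (big_cat_nat (n := (index i sgm).+1)) //=; last by rewrite ltnS ltnW.
rewrite big1_seq ?add0r; last first.
  by move=> k /andP[_]; rewrite mem_index_iota ltnS => /andP[_ h]; rewrite ltnNge h.
rewrite (eq_big_nat _ _ (F2 := fun k => ly k - ly k.+1)); last first.
  by move=> k /andP[h _]; rewrite h.
by rewrite tele ?ly_index ?ly_big ?subr0 // ltnS ltnW.
Qed.

Lemma indic_bin (s : seq 'I_n) : binvec (@Defs.indic R n s).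
Proof. by move=> i; rewrite mxE; case: ifP; [right|left]. Qed.

Hypothesis yb : unitbox y.

Lemma ly_bounds k : 0 <= ly k <= 1.
Proof.
case: k => [|k]; first by rewrite /lovasz_y ler01 lexx.
have [kn|nk] := ltnP k n; last by rewrite ly_big // lexx ler01.
by rewrite (ly_nth (Ordinal kn)) //; exact: yb.
Qed.

Lemma ly_mono p q : (p <= q)%N -> ly q <= ly p.
Proof.
case: p => [|p] pq; first by have /andP[_ ->] := ly_bounds q.
case: q pq => [//|q]; rewrite ltnS => pq.
have [qn|nq] := ltnP q n; last by rewrite ly_big //; have /andP[] := ly_bounds p.+1.
have i0 : 'I_n := Ordinal qn.
by rewrite (ly_nth i0) // (ly_nth i0) ?(leq_ltn_trans pq qn) //; exact: lo_sorted.
Qed.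

Lemma ly_lam_ge0 k : 0 <= ly k - ly k.+1.
Proof. by rewrite subr_ge0 ly_mono. Qed.

Lemma indic_level (k : nat) : ly k.+1 < ly k ->
  @Defs.indic R n (take k sgm) = \col_i (((ly k.+1 < y i 0)%R : bool)%:R) :> 'cV[R]_n.
Proof.
move=> lk; apply/matrixP => i j; rewrite !mxE in_take ?lo_mem // -ly_index.
case: ltnP => h.
  by rewrite (lt_le_trans lk) // ly_mono.
by rewrite ltNge ly_mono.
Qed.

End Lo.

Definition lam {R : realType} {n} (y : 'cV[R]_n) (k : nat) : R := lovasz_y y k - lovasz_y y k.+1.
Definition chainE {R : realType} {n} (y : 'cV[R]_n) (k : nat) : 'cV[R]_n :=
  @Defs.indic R n (take k (lovasz_order y)).

Lemma fin_argmax {R : realType} (I : finType) (i0 : I) (f : I -> R) :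
  exists i, forall j, f j <= f i.
Proof.
by case: (@arg_maxP _ R I i0 xpredT f isT) => i _ H; exists i => j; exact: H.
Qed.

Definition bv {R : realType} {n} (p : {ffun 'I_n -> bool}) : 'cV[R]_n := \col_i ((p i)%:R).

Lemma bv_bin {R : realType} {n} (p : {ffun 'I_n -> bool}) : binvec (bv p : 'cV[R]_n).
Proof. by move=> i; rewrite mxE; case: (p i); [right|left]. Qed.

Lemma bin_bv {R : realType} {n} (z : 'cV[R]_n) : binvec z -> z = bv [ffun i => z i 0 == 1].
Proof.
move=> bz; apply/matrixP => i j; rewrite (ord1 j) !mxE ffunE.
by case: (bz i) => ->; rewrite ?eqxx // eq_sym oner_eq0.
Qed.

Lemma sol_exists {R : realType} {n} (h : 'cV[R]_n -> R) : exists z, SOL h (@binvec R n) z.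
Proof.
have [p Hp] := fin_argmax [ffun _ => false] (fun p : {ffun 'I_n -> bool} => h (bv p)).
exists (bv p); split; first exact: bv_bin.
by move=> z /bin_bv ->; exact: Hp.
Qed.

Section LB.
Context {R : realType} {m r n : nat} (F : 'cV[R]_m -> 'cV[R]_r) (C : 'M[R]_(r, n)).

Lemma lovaszE (h : 'cV[R]_n -> R) y : lovasz h y =
  \sum_(k < n.+1) lam y k * h (chainE y k).
Proof. by apply: eq_bigr => k _; rewrite mulrC. Qed.

Lemma lov_le_max (h : 'cV[R]_n -> R) y M : unitbox y ->
  (forall b, binvec b -> h b <= M) -> lovasz h y <= M.
Proof.
move=> yb hM; rewrite lovaszE -[leRHS]mul1r -(ly_sum1 y) mulr_suml.
apply: ler_sum => k _; apply: ler_wpM2l; first exact: ly_lam_ge0.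
by apply: hM; exact: indic_bin.
Qed.

Lemma lov_exists_ge (h : 'cV[R]_n -> R) y : unitbox y ->
  exists k : 'I_n.+1, lovasz h y <= h (chainE y k).
Proof.
move=> yb.
have [k Hk] := fin_argmax ord0 (fun k : 'I_n.+1 => h (chainE y k)).
exists k; rewrite lovaszE -[leRHS]mul1r -(ly_sum1 y) mulr_suml.
by apply: ler_sum => i _; apply: ler_wpM2l; [exact: ly_lam_ge0|exact: Hk].
Qed.

Lemma lov_mix x y : unitbox y ->
  lovasz (Theta F C x) y = Theta F C x y +
   2^-1 * (\sum_(k < n.+1) lam y k *
             sqnorm (C *m chainE y k)
           - sqnorm (C *m y)).
Proof.
move=> yb; rewrite lovaszE.
rewrite (@mixTheta _ _ _ _ F C _ (fun k : 'I_n.+1 => lam y k)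
   (fun k : 'I_n.+1 => chainE y k) x (ly_sum1 y)).
by rewrite ly_decomp.
Qed.

Lemma lov_ge x y : unitbox y -> Theta F C x y <= lovasz (Theta F C x) y.
Proof.
move=> yb; rewrite lov_mix // lerDl; apply: mulr_ge0; first by rewrite invr_ge0 ler0n.
rewrite subr_ge0.
have := @jensen_sq _ _ _ (fun k : 'I_n.+1 => lam y k)
   (fun k : 'I_n.+1 => C *m chainE y k) (ly_sum1 y) (ly_lam_ge0 yb).
congr (_ <= _); congr sqnorm.
rewrite -[in RHS](ly_decomp y) mulmx_sumr; apply: eq_bigr => k _.
by rewrite scalemxAr.
Qed.

End LB.

Lemma bin_box {R : realType} {n} (z : 'cV[R]_n) : binvec z -> unitbox z.
Proof. by move=> bz i; case: (bz i) => ->; rewrite lexx ler01. Qed.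

Section Parts.
Context {R : realType} {m r n : nat} (F : 'cV[R]_m -> 'cV[R]_r) (C : 'M[R]_(r, n))
  (X : set 'cV[R]_m).

Lemma part2 xs ys yb :
  saddle_point X (@unitbox R n) (fun x y => lovasz (Theta F C x) y) xs ys ->
  SOL (Theta F C xs) (@binvec R n) yb ->
  global_minimax X (@binvec R n) (Theta F C) xs yb.
Proof.
move=> [Xxs [bys [h1 h2]]] [byb hyb].
split=> //; split=> //; split=> // x Xx.
have [k Hk] := lov_exists_ge (Theta F C x) bys.
exists (chainE ys k); first exact: indic_bin.
apply: le_trans Hk; apply: le_trans (h2 _ Xx).
apply: le_trans (h1 _ (bin_box byb)).
exact: lov_ge (bin_box byb).
Qed.

Lemma part3 xs ys :
  saddle_point X (@unitbox R n) (fun x y => lovasz (Theta F C x) y) xs ys ->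
  conv_hull (SOL (Theta F C xs) (@binvec R n)) ys.
Proof.
move=> [Xxs [bys [h1 h2]]].
have [yb [byb hyb]] := sol_exists (Theta F C xs).
set M := Theta F C xs yb.
have LM : M <= lovasz (Theta F C xs) ys.
  by apply: le_trans (h1 _ (bin_box byb)); exact: lov_ge (bin_box byb).
have Hk : forall k : 'I_n.+1, 0 < lam ys k -> Theta F C xs (chainE ys k) = M.
  have S0 : \sum_(k < n.+1) lam ys k * (M - Theta F C xs (chainE ys k)) = 0.
    apply/eqP; rewrite eq_le; apply/andP; split; last first.
      apply: sumr_ge0 => k _; apply: mulr_ge0; first exact: ly_lam_ge0.
      by rewrite subr_ge0; apply: hyb; exact: indic_bin.
    have -> : \sum_(k < n.+1) lam ys k * (M - Theta F C xs (chainE ys k)) =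
       M * \sum_(k < n.+1) lam ys k - lovasz (Theta F C xs) ys.
      rewrite lovaszE mulr_sumr -sumrB; apply: eq_bigr => k _; ring.
    by rewrite (ly_sum1 ys) mulr1 subr_le0.
  move=> k lk.
  have Hnn : forall i : 'I_n.+1, true -> 0 <= lam ys i * (M - Theta F C xs (chainE ys i)).
    move=> i _; apply: mulr_ge0; first exact: ly_lam_ge0.
    by rewrite subr_ge0; apply: hyb; exact: indic_bin.
  have E0 : lam ys k * (M - Theta F C xs (chainE ys k)) = 0.
    by apply: (psumr_eq0P Hnn S0).
  move/eqP: E0; rewrite mulf_eq0 (gt_eqF lk) /= subr_eq0 => /eqP ->; by [].
exists n.+1, (fun k => if 0 < lam ys k then chainE ys k else yb), (fun k => lam ys k).
split; [|split; [|split]].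
- move=> k; case: ifP => [lk|_]; last by split.
  split; first exact: indic_bin.
  by move=> z bz; rewrite Hk //; exact: hyb.
- by move=> k; exact: ly_lam_ge0.
- exact: ly_sum1.
- rewrite -[LHS](ly_decomp ys); apply: eq_bigr => k _.
  case: ifP => // lk.
  have : lam ys k = 0 by apply/eqP; rewrite eq_le ly_lam_ge0 // andbT leNgt lk.
  by rewrite /lam => ->; rewrite !scale0r.
Qed.

End Parts.

Lemma cont_sum {T : topologicalType} {R : realType} (I : Type) (s : seq I) (f : I -> T -> R) :
  (forall i, continuous (f i)) -> continuous (fun x => \sum_(i <- s) f i x).
Proof.
move=> hf; elim: s => [|i s IH].
  by rewrite (_ : (fun x => _) = fun _ => 0); [exact: cst_continuous|apply/funext => x; rewrite big_nil].
rewrite (_ : (fun x => _) = (f i) + (fun x => \sum_(j <- s) f j x)); last first.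
  by apply/funext => x; rewrite big_cons.
by move=> x; apply: continuousD; [exact: hf|exact: IH].
Qed.

Lemma cont_mul {T : topologicalType} {R : realType} (f g : T -> R) :
  continuous f -> continuous g -> continuous (fun x => f x * g x).
Proof. by move=> hf hg x; apply: continuousM; [exact: hf|exact: hg]. Qed.

Lemma cont_add {T : topologicalType} {R : realType} (f g : T -> R) :
  continuous f -> continuous g -> continuous (fun x => f x + g x).
Proof. by move=> hf hg x; apply: continuousD; [exact: hf|exact: hg]. Qed.

Lemma cont_cst {T : topologicalType} {R : realType} (c : R) : continuous (fun _ : T => c).
Proof. exact: cst_continuous. Qed.

Lemma cont_Theta {R : realType} {m r n} (F : 'cV[R]_m -> 'cV[R]_r) (C : 'M[R]_(r, n)) z :
  affine_map F -> continuous (fun x => Theta F C x z).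
Proof.
move=> [A [b hF]].
rewrite (_ : (fun x => _) = fun x : 'cV[R]_m => 2^-1 * \sum_k
   ((\sum_j A k j * x j 0 + (b k 0 - (C *m z) k 0)) * (\sum_j A k j * x j 0 + (b k 0 - (C *m z) k 0)))); last first.
  apply/funext => x; rewrite /Theta /sqnorm hF; congr (_ * _); apply: eq_bigr => k _.
  by rewrite expr2 !mxE addrA.
apply: cont_mul; first exact: cont_cst.
apply: cont_sum => k; apply: cont_mul; (apply: cont_add; last exact: cont_cst);
  apply: cont_sum => j; (apply: cont_mul; [exact: cont_cst|exact: coord_continuous]).
Qed.

Lemma sqnormZ {R : realType} {r} (e : R) (d : 'cV[R]_r) : sqnorm (e *: d) = e ^+ 2 * sqnorm d.
Proof. by rewrite !sqnormE dotZl dotZr mulrA expr2. Qed.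

Lemma convex_mem {R : realType} {m} (X : set 'cV[R]_m) (e : R) x x0 :
  convex_set X -> X x -> X x0 -> 0 <= e -> e <= 1 -> X (e *: x + (1 - e) *: x0).
Proof.
move=> hX Xx Xx0 e0 e1.
have := hX x x0 (Itv01 e0 e1) (mem_set Xx) (mem_set Xx0).
by rewrite inE.
Qed.

Lemma vi {R : realType} {m r n} (F : 'cV[R]_m -> 'cV[R]_r) (C : 'M[R]_(r, n))
  (X : set 'cV[R]_m) z x0 :
  convex_set X -> affine_map F -> X x0 ->
  (forall x, X x -> Theta F C x0 z <= Theta F C x z) ->
  forall x, X x -> 0 <= dot (F x0 - C *m z) (F x - F x0).
Proof.
move=> hX [A [b hF]] Xx0 hmin x Xx.
set a := F x0 - C *m z; set d := F x - F x0.
have key : forall e : R, 0 <= e -> e <= 1 -> 0 <= 2 * e * dot a d + e ^+ 2 * sqnorm d.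
  move=> e e0 e1.
  have := hmin _ (convex_mem hX Xx Xx0 e0 e1); rewrite /Theta.
  have -> : F (e *: x + (1 - e) *: x0) - C *m z = a + e *: d.
    rewrite /a /d !hF mulmxDr -!scalemxAr.
    set p := A *m x; set q := A *m x0.
    by apply/matrixP => i j; rewrite !mxE; ring.
  rewrite -/a sqnormD dotZr sqnormZ => h.
  rewrite ler_pM2l ?invr_gt0 ?ltr0n // in h.
  move: h; set D := dot a d; set S := sqnorm d; set Sa := sqnorm a; lra.
rewrite leNgt; apply/negP => D1.
have S0 := sqnorm_ge0 d.
set S := sqnorm d in S0 key; set D := dot a d in D1 key.
have SD : 0 < S - D by lra.
pose e := - D / (S - D).
have e0 : 0 < e by rewrite /e divr_gt0 // oppr_gt0.
have e1 : e <= 1 by rewrite /e ler_pdivrMr // mul1r; lra.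
have he : e * (S - D) = - D by rewrite /e divfK // gt_eqF.
have := key e (ltW e0) e1.
nra.
Qed.

Section Game.
Context {R : realType} {m r n : nat} (F : 'cV[R]_m -> 'cV[R]_r) (C : 'M[R]_(r, n))
  (X : set 'cV[R]_m).
Hypotheses (hX0 : X !=set0) (hXk : compact X) (hF : affine_map F).

Local Notation P := {ffun 'I_n -> bool}.
Local Notation N := #|{: P}|.

Definition wt (mu : 'rV[R]_N) (p : P) : R := mu 0 (enum_rank p).
Definition Phi x (mu : 'rV[R]_N) : R := \sum_(p : P) wt mu p * Theta F C x (bv p).
Definition ybar (mu : 'rV[R]_N) : 'cV[R]_n := \sum_(p : P) wt mu p *: bv p.
Definition Delta : set 'rV[R]_N := [set mu | (forall p, 0 <= wt mu p) /\ \sum_(p : P) wt mu p = 1].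

Lemma cont_Phi mu : continuous (fun x => Phi x mu).
Proof.
apply: cont_sum => p; apply: cont_mul; first exact: cont_cst.
exact: cont_Theta.
Qed.

Lemma min_exists mu : exists x, X x /\ forall x', X x' -> Phi x mu <= Phi x' mu.
Proof.
have [c cX H] := compact_EVT_min hX0 hXk (continuous_subspaceT (@cont_Phi mu)).
exists c; split; first by move: cX; rewrite inE.
by move=> x' Xx'; apply: H; rewrite inE.
Qed.

Lemma Theta_ge0 x z : 0 <= Theta F C x z.
Proof. by apply: mulr_ge0; [rewrite invr_ge0 ler0n|exact: sqnorm_ge0]. Qed.

Lemma bound_exists : exists B, 0 <= B /\ forall x, X x -> forall p, Theta F C x (bv p) <= B.
Proof.
have cS : continuous (fun x => \sum_(p : P) Theta F C x (bv p)).
  by apply: cont_sum => p; exact: cont_Theta.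
have [c cX H] := compact_EVT_max hX0 hXk (continuous_subspaceT cS).
exists (\sum_(p : P) Theta F C c (bv p)); split.
  by apply: sumr_ge0 => p _; exact: Theta_ge0.
move=> x Xx p; apply: le_trans (H x _); last by rewrite inE.
rewrite (bigD1 p) //= lerDl; apply: sumr_ge0 => q _; exact: Theta_ge0.
Qed.


Lemma wt_sum_abs_cont (nu : 'rV[R]_N) :
  continuous (fun mu : 'rV[R]_N => \sum_(p : P) `|wt mu p - wt nu p|).
Proof.
apply: cont_sum => p mu.
apply: (@continuous_comp _ _ _ (fun mu : 'rV[R]_N => wt mu p - wt nu p) (@Num.Def.normr R R)).
  apply: continuousB; first exact: coord_continuous.
  exact: cst_continuous.
exact: norm_continuous.
Qed.

Section WithXm.
Variable xm : 'rV[R]_N -> 'cV[R]_m.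
Hypothesis Hxm : forall mu, X (xm mu) /\ forall x', X x' -> Phi (xm mu) mu <= Phi x' mu.
Variable B : R.
Hypothesis hB0 : 0 <= B.
Hypothesis hB : forall x, X x -> forall p, Theta F C x (bv p) <= B.

Lemma W_lip mu nu :
  Phi (xm mu) mu - Phi (xm nu) nu <= B * \sum_(p : P) `|wt mu p - wt nu p|.
Proof.
have h1 : Phi (xm mu) mu <= Phi (xm nu) mu by apply: (Hxm mu).2; exact: (Hxm nu).1.
have h2 : Phi (xm mu) mu - Phi (xm nu) nu <= Phi (xm nu) mu - Phi (xm nu) nu by rewrite lerD2r.
apply: le_trans h2 _.
rewrite /Phi -sumrB mulr_sumr; apply: ler_sum => p _.
rewrite -mulrBl mulrC.
have T0 := Theta_ge0 (xm nu) (bv p).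
have TB := hB (Hxm nu).1 p.
apply: le_trans (ler_wpM2l T0 (ler_norm _)) _.
by apply: ler_wpM2r => //; exact: normr_ge0.
Qed.

Lemma W_cont : continuous (fun mu => Phi (xm mu) mu).
Proof.
move=> nu; apply/(cvgrPdist_lt (F := nbhs nu)) => eps eps0.
have := @wt_sum_abs_cont nu nu.
move/(cvgrPdist_lt (F := nbhs nu)) => /(_ (eps / (B + 1))).
have epsB : 0 < eps / (B + 1) by rewrite divr_gt0 // ltr_wpDl.
move=> /(_ epsB); apply: filterS => mu.
have -> : \sum_(p : P) `|wt nu p - wt nu p| = 0.
  by rewrite big1 // => p _; rewrite subrr normr0.
rewrite sub0r normrN ger0_norm; last by apply: sumr_ge0 => p _; exact: normr_ge0.
move=> hs.
have l1 := W_lip nu mu; have l2 := W_lip mu nu.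
have e1 : \sum_(p : P) `|wt nu p - wt mu p| = \sum_(p : P) `|wt mu p - wt nu p|.
  by apply: eq_bigr => p _; rewrite distrC.
rewrite e1 in l1.
set s := \sum_(p : P) `|wt mu p - wt nu p| in hs l1 l2.
have : B * s < eps.
  have : B * s <= B * (eps / (B + 1)) by apply: ler_wpM2l => //; exact: ltW.
  move/le_lt_trans; apply.
  rewrite mulrA ltr_pdivrMr ?ltr_wpDl //; nra.
move=> Bs; rewrite ltr_norml; apply/andP; split; lra.
Qed.

End WithXm.

Lemma Delta_closed : closed Delta.
Proof.
have -> : Delta = (\bigcap_(p in [set: P]) [set mu : 'rV[R]_N | 0 <= wt mu p]) `&`
    ((fun mu : 'rV[R]_N => \sum_(p : P) wt mu p) @^-1` [set x | x = 1]).
  apply/seteqP; split => mu /=.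
    by move=> [h1 h2]; split => // p _; exact: h1.
  by move=> [h1 h2]; split => // p; exact: h1.
apply: closedI.
  apply: closed_bigI => p _.
  have -> : [set mu : 'rV[R]_N | 0 <= wt mu p] = (fun mu : 'rV[R]_N => wt mu p) @^-1` [set x | 0 <= x].
    by [].
  have cw : continuous (fun mu : 'rV[R]_N => wt mu p) by move=> mu; exact: coord_continuous.
  apply: (continuous_closedP _).1 cw _ _; exact: closed_ge.
have cs : continuous (fun mu : 'rV[R]_N => \sum_(p : P) wt mu p).
  by apply: cont_sum => p mu; exact: coord_continuous.
apply: (continuous_closedP _).1 cs _ _; exact: closed_eq.
Qed.

Lemma Delta_compact : compact Delta.
Proof.
have K := @rV_compact _ N (fun _ : 'I_N => `[(0:R), 1]%classic) (fun _ => @segment_compact R 0 1).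
apply: (subclosed_compact Delta_closed K).
move=> mu [h1 h2] i /=.
rewrite in_itv /=.
have -> : mu ord0 i = wt mu (enum_val i) by rewrite /wt enum_valK.
apply/andP; split; first exact: h1.
rewrite -h2 (bigD1 (enum_val i)) //= lerDl; apply: sumr_ge0 => p _; exact: h1.
Qed.

Definition evec (q : P) : 'rV[R]_N := \row_i ((i == enum_rank q)%:R).

Lemma wt_evec q p : wt (evec q) p = (p == q)%:R.
Proof. by rewrite /wt /evec mxE (inj_eq enum_rank_inj). Qed.

Lemma sum_pred1 (f : P -> R) q : \sum_(p : P) (p == q)%:R * f p = f q.
Proof.
rewrite (bigD1 q) //= eqxx mul1r big1 ?addr0 // => p /negbTE ->; exact: mul0r.
Qed.

Lemma evec_Delta q : Delta (evec q).
Proof.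
split=> [p|]; first by rewrite wt_evec ler0n.
under eq_bigr do rewrite wt_evec -[(_ == _)%:R]mulr1.
exact: sum_pred1.
Qed.

End Game.

Lemma key_alg {R : realType} {r} (us ut v w : 'cV[R]_r) (t : R) : 0 < t ->
  0 <= dot (us - v) (ut - us) ->
  0 <= dot (ut - ((1 - t) *: v + t *: w)) (us - ut) ->
  sqnorm (us - w) - sqnorm (ut - w) <= t * (sqnorm (us - w) + sqnorm (w - v)).
Proof.
move=> t0 h1 h2.
set a := us - w; set e := ut - us; set g := w - v.
have E1 : us - v = a + g by apply/matrixP => i j; rewrite /a /g !mxE; ring.
have E2 : ut - w = a + e by apply/matrixP => i j; rewrite /a /e !mxE; ring.
have E3 : ut - ((1 - t) *: v + t *: w) = (a + g) + e - t *: g.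
  by apply/matrixP => i j; rewrite /a /e /g !mxE; ring.
have E4 : us - ut = - e by apply/matrixP => i j; rewrite /e !mxE; ring.
rewrite E1 -/e in h1; rewrite E3 E4 in h2; rewrite E2.
clearbody a e g.
have f1 := sqnorm_ge0 (t *: a + e).
have f2 := sqnorm_ge0 (t *: g - e).
have f3 := sqnorm_ge0 e.
rewrite sqnormD sqnormZ dotZl in f1.
rewrite sqnormB sqnormZ dotZl in f2.
rewrite sqnormD.
rewrite !dotNr !dotDl !dotNl !dotZl in h2.
rewrite dotDl in h1.
rewrite !sqnormE in f1 f2 f3 *.
move: h1 h2 f1 f2 f3.
set aa := dot a a; set ae := dot a e; set ge := dot g e; set ee := dot e e; set gg := dot g g.
move=> h1 h2 f1 f2 f3.
have k1 : ee <= t * ge by lra.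
have k2 : t * ge <= t * (t * gg) by nra.
have k3 : t * (- 2 * ae) <= t * (t * aa + t * gg) by nra.
rewrite ler_pM2l // in k3.
nra.
Qed.

Section Final.
Context {R : realType} {m r n : nat} (F : 'cV[R]_m -> 'cV[R]_r) (C : 'M[R]_(r, n)).
Local Notation P := {ffun 'I_n -> bool}.
Local Notation N := #|{: P}|.

Definition comb (t : R) (mu : 'rV[R]_N) (q : P) : 'rV[R]_N := (1 - t) *: mu + t *: evec q.

Lemma wt_comb t mu q p : wt (comb t mu q) p = (1 - t) * wt mu p + t * (p == q)%:R.
Proof. by rewrite /comb /wt !mxE (inj_eq enum_rank_inj). Qed.

Lemma Delta_comb t mu q : 0 <= t -> t <= 1 -> Delta mu -> Delta (comb t mu q).
Proof.
move=> t0 t1 [h1 h2]; split=> [p|].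
  rewrite wt_comb; apply: addr_ge0; apply: mulr_ge0 => //; rewrite ?subr_ge0 ?ler0n //.
under eq_bigr do rewrite wt_comb.
rewrite big_split /= -mulr_sumr h2.
have -> : \sum_(p : P) t * (p == q)%:R = \sum_(p : P) (p == q)%:R * t.
  by apply: eq_bigr => p _; rewrite mulrC.
rewrite sum_pred1; ring.
Qed.

Lemma Phi_comb t mu q x : Phi F C x (comb t mu q) = (1 - t) * Phi F C x mu + t * Theta F C x (bv q).
Proof.
rewrite /Phi; under eq_bigr do rewrite wt_comb mulrDl.
rewrite big_split /= mulr_sumr.
have -> : \sum_(p : P) t * (p == q)%:R * Theta F C x (bv p) =
   \sum_(p : P) (p == q)%:R * (t * Theta F C x (bv p)).
  by apply: eq_bigr => p _; ring.
rewrite sum_pred1; congr (_ + _); apply: eq_bigr => p _; ring.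
Qed.

Lemma ybar_comb t mu q : ybar (comb t mu q) = (1 - t) *: ybar mu + t *: bv q.
Proof.
rewrite /ybar; under eq_bigr do rewrite wt_comb scalerDl.
rewrite big_split /= scaler_sumr; congr (_ + _).
  by apply: eq_bigr => p _; rewrite scalerA.
rewrite (bigD1 q) //= eqxx mulr1 big1 ?addr0 // => p /negbTE ->.
by rewrite mulr0 scale0r.
Qed.

Lemma Phi_mix mu x : \sum_(p : P) wt mu p = 1 ->
  Phi F C x mu = Theta F C x (ybar mu) +
    2^-1 * (\sum_(p : P) wt mu p * sqnorm (C *m bv p) - sqnorm (C *m ybar mu)).
Proof. by move=> h; rewrite /Phi (@mixTheta _ _ _ _ F C _ (wt mu) bv x h). Qed.

End Final.

Section Exist.
Context {R : realType} {m r n : nat} (F : 'cV[R]_m -> 'cV[R]_r) (C : 'M[R]_(r, n))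
  (X : set 'cV[R]_m).
Hypotheses (hX0 : X !=set0) (hXc : convex_set X) (hXk : compact X) (hF : affine_map F)
  (hC : acute C).
Local Notation P := {ffun 'I_n -> bool}.
Local Notation N := #|{: P}|.

Variable xm : 'rV[R]_N -> 'cV[R]_m.
Hypothesis Hxm : forall mu, X (xm mu) /\ forall x', X x' -> Phi F C (xm mu) mu <= Phi F C x' mu.
Variable mus : 'rV[R]_N.
Hypothesis musD : Delta mus.
Hypothesis Hmax : forall mu, Delta mu -> Phi F C (xm mu) mu <= Phi F C (xm mus) mus.

Let xs := xm mus.
Let Ws := Phi F C xs mus.

Lemma theta_min mu : Delta mu -> forall x, X x -> Theta F C (xm mu) (ybar mu) <= Theta F C x (ybar mu).
Proof.
move=> [_ h1] x Xx; have := (Hxm mu).2 x Xx.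
by rewrite !(Phi_mix F C _ h1) lerD2r.
Qed.

Lemma Q q : Theta F C xs (bv q) <= Ws.
Proof.
rewrite leNgt; apply/negP => hq.
set d := Theta F C xs (bv q) - Ws.
have d0 : 0 < d by rewrite /d subr_gt0.
set K := 2^-1 * (sqnorm (F xs - C *m bv q) + sqnorm (C *m bv q - C *m ybar mus)).
have K0 : 0 <= K by apply: mulr_ge0; [rewrite invr_ge0 ler0n|apply: addr_ge0; exact: sqnorm_ge0].
have bound : forall t, 0 < t -> t <= 1 -> d <= t * K.
  move=> t t0 t1.
  set mut := comb t mus q.
  have mutD : Delta mut := Delta_comb q (ltW t0) t1 musD.
  set xt := xm mut.
  have Xxt := (Hxm mut).1.
  have Xxs : X xs := (Hxm mus).1.
  have ha : Theta F C xt (bv q) <= Ws.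
    have h1 : (1 - t) * Phi F C xt mus + t * Theta F C xt (bv q) <= Ws.
      by rewrite -Phi_comb; exact: Hmax mutD.
    have h2 : Ws <= Phi F C xt mus := (Hxm mus).2 _ Xxt.
    have h3 : (1 - t) * Ws <= (1 - t) * Phi F C xt mus by apply: ler_wpM2l => //; lra.
    have h4 : t * Theta F C xt (bv q) <= t * Ws by lra.
    by rewrite ler_pM2l in h4.
  have vi1 := vi hXc hF (Hxm mus).1 (theta_min musD) Xxt.
  have vi2 := vi hXc hF (Hxm mut).1 (theta_min mutD) Xxs.
  rewrite /mut ybar_comb mulmxDr -!scalemxAr in vi2.
  have := key_alg t0 vi1 vi2.
  rewrite /d /K /Theta -/xs -/xt.
  move: ha; rewrite /Theta -/xt => ha hk.
  set A := sqnorm (F xs - C *m bv q) in hk *.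
  set B := sqnorm (F xt - C *m bv q) in hk ha *.
  set G := sqnorm (C *m bv q - C *m ybar mus) in hk *.
  nra.
pose t := d / (d + K + 1).
have t0 : 0 < t by rewrite /t divr_gt0 //; lra.
have t1 : t <= 1 by rewrite /t ler_pdivrMr ?mul1r; lra.
have := bound t t0 t1.
have ht : t * (d + K + 1) = d by rewrite /t divfK // gt_eqF //; lra.
nra.
Qed.

Lemma bin_le_Ws z : binvec z -> Theta F C xs z <= Ws.
Proof. by move=> /bin_bv ->; exact: Q. Qed.

Lemma Ws_le_sol z : SOL (Theta F C xs) (@binvec R n) z -> Ws <= Theta F C xs z.
Proof.
move=> [bz hz]; rewrite /Ws /Phi.
rewrite -[leRHS]mul1r -musD.2 mulr_suml; apply: ler_sum => p _.
apply: ler_wpM2l; first exact: musD.1.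
by apply: hz; exact: bv_bin.
Qed.

Lemma sol_support p : 0 < wt mus p -> SOL (Theta F C xs) (@binvec R n) (bv p).
Proof.
move=> wp; split; first exact: bv_bin.
move=> z bz; apply: le_trans (bin_le_Ws bz) _.
have Hnn : forall p' : P, true -> 0 <= wt mus p' * (Ws - Theta F C xs (bv p')).
  move=> p' _; apply: mulr_ge0; first exact: musD.1.
  by rewrite subr_ge0; exact: Q.
have S0 : \sum_(p' : P) wt mus p' * (Ws - Theta F C xs (bv p')) = 0.
  have -> : \sum_(p' : P) wt mus p' * (Ws - Theta F C xs (bv p')) =
     Ws * \sum_(p' : P) wt mus p' - Ws.
    by rewrite /Ws /Phi mulr_sumr -sumrB; apply: eq_bigr => p' _; ring.
  by rewrite musD.2 mulr1 subrr.
have E0 : wt mus p * (Ws - Theta F C xs (bv p)) = 0 by apply: (psumr_eq0P Hnn S0).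
move/eqP: E0; rewrite mulf_eq0 (gt_eqF wp) /= subr_eq0 => /eqP <-; exact: lexx.
Qed.

Lemma ys_entry i : ybar mus i 0 = levf (index_enum P) (wt mus) bv i.
Proof. by rewrite /ybar summxE /levf; apply: eq_bigr => p _; rewrite mxE. Qed.

Lemma ys_box : unitbox (ybar mus).
Proof.
move=> i; rewrite ys_entry.
have := levf_bounds (index_enum P) i musD.1 (fun p => @bv_bin R n p).
by rewrite musD.2.
Qed.

Lemma saddle : saddle_point X (@unitbox R n) (fun x y => lovasz (Theta F C x) y) xs (ybar mus).
Proof.
set ys := ybar mus.
have Lys : lovasz (Theta F C xs) ys = Ws.
  rewrite lovaszE -[RHS]mul1r -(ly_sum1 ys) mulr_suml; apply: eq_bigr => k _.
  have [lk0|lk] := eqVneq (lam ys k) 0; first by move: lk0; rewrite /lam => ->; rewrite !mul0r.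
  have lkp : 0 < lam ys k by rewrite lt_neqAle eq_sym lk ly_lam_ge0 //; exact: ys_box.
  congr (_ * _); apply/eqP; rewrite eq_le; apply/andP; split.
    by apply: bin_le_Ws; exact: indic_bin.
  apply: Ws_le_sol.
  have lv : lovasz_y ys k.+1 < lovasz_y ys k by rewrite -subr_gt0.
  rewrite /chainE (indic_level ys_box lv).
  have -> : \col_i (((lovasz_y ys k.+1 < ys i 0)%R : bool)%:R) =
     lev (index_enum P) (wt mus) bv (lovasz_y ys k.+1) :> 'cV[R]_n.
    by apply/matrixP => i j; rewrite !mxE /ys ys_entry.
  apply: (level_sol (S := SOL (Theta F C xs) (@binvec R n))).
  - by move=> a b ha hb; exact: sol_lattice.
  - exact: musD.1.
  - by move=> p; exact: bv_bin.
  - by move=> p; exact: sol_support.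
  - by have /andP[] := ly_bounds ys_box k.+1.
  - rewrite musD.2; apply: lt_le_trans lv _.
    by have /andP[] := ly_bounds ys_box k.
split; first exact: (Hxm mus).1.
split; first exact: ys_box.
split.
  move=> y yb; rewrite Lys; apply: lov_le_max => //; exact: bin_le_Ws.
move=> x Xx.
rewrite !(lov_mix F C _ ys_box) lerD2r.
exact: (theta_min musD Xx).
Qed.

End Exist.

Lemma saddle_exists {R : realType} {m r n : nat} (F : 'cV[R]_m -> 'cV[R]_r) (C : 'M[R]_(r, n))
  (X : set 'cV[R]_m) :
  X !=set0 -> convex_set X -> compact X -> affine_map F -> acute C ->
  exists xs ys, saddle_point X (@unitbox R n) (fun x y => lovasz (Theta F C x) y) xs ys.
Proof.
move=> hX0 hXc hXk hF hC.
case: (choice (min_exists C hX0 hXk hF)) => xm Hxm.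
have [B [hB0 hB]] := bound_exists C hX0 hXk hF.
have Wc := W_cont Hxm hB0 hB.
have D0 : (@Delta R n) !=set0 by exists (evec [ffun _ => false]); exact: evec_Delta.
have [mus musD Hmax] := compact_EVT_max D0 (@Delta_compact R n) (continuous_subspaceT Wc).
rewrite inE in musD.
exists (xm mus), (ybar mus).
apply: saddle => //.
by move=> mu muD; apply: Hmax; rewrite inE.
Qed.

Unset Implicit Arguments.

Theorem mainTheorem4 (R : realType) (m r n : nat) (X : set 'cV[R]_m)
  (F : 'cV[R]_m -> 'cV[R]_r) (C : 'M[R]_(r, n)) :
  X !=set0 -> convex_set X -> compact X ->
  affine_map F -> acute C -> nonzero_columns C ->
  let ThL := fun x y => lovasz (Theta F C x) y in
  (exists xs ys, saddle_point X (@unitbox R n) ThL xs ys) /\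
  (forall xs ys, saddle_point X (@unitbox R n) ThL xs ys ->
     forall yb, SOL (Theta F C xs) (@binvec R n) yb ->
       global_minimax X (@binvec R n) (Theta F C) xs yb) /\
  (forall xs ys, saddle_point X (@unitbox R n) ThL xs ys ->
     conv_hull (SOL (Theta F C xs) (@binvec R n)) ys).
Proof.
move=> hX0 hXc hXk hF hC ThL; split; [|split].
- exact: saddle_exists.
- by move=> xs ys hs yb hyb; exact: part2 hs hyb.
- by move=> xs ys hs; exact: part3 hs.
Qed.
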